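(* In the setting described in the context, assume (F1) and (F2), let $\gamma=\frac{\beta L}{L+\beta}$, and let $\alpha\in\big(0,\frac{2}{L+\beta}\big]$. Then for all $t\ge0$, $$\|\bar w(t+1)-w_*\|\le\Big(1-\gamma\alpha+\frac{\alpha L\delta}{n}\|1_n-n\pi\|_\pi\sigma_W^t\Big)\|\bar w(t)-w_*\|+\frac{\alpha L\delta}{n}\|n\pi\otimes\bar w(t)-w(t)\|_{\pi\otimes1_d}+\frac{\alpha L\delta}{n}\|1_n-n\pi\|_\pi\sigma_W^t\|w_*\|.$$
   Context: $G=(V,E)$ directed on $\{1,\dots,n\}$, self-loop at each vertex, strongly connected; $d_j=|\{i:(j,i)\in E\}|$, $W_{ij}=1/d_j$ if $(j,i)\in E$, else $0$. $\pi$: $W\pi=\pi$, $\pi_i>0$, $\sum\pi_i=1$; $W^\infty=\pi1_n^\top$ (so $(W^\infty\otimes I_d)w=n\pi\otimes\bar w$). $\|x\|_\pi=(\sum_ix_i^2/\pi_i)^{1/2}$ on $\mathbb R^n$, $|||\cdot|||_\pi$ the induced operator norm, $\sigma_W=|||W-W^\infty|||_\pi$ (known $<1$). On $\mathbb R^{nd}$, $\|x\|_{\pi\otimes1_d}=(\sum_i\|x_i\|^2/\pi_i)^{1/2}$. $v\otimes u=\mathrm{col}(v_1u,\dots,v_nu)$. $f_i:\mathbb R^d\to\mathbb R$, $f=\frac1n\sum f_i$; (F1) each $\nabla f_i$ is $L_i$-Lipschitz, $L=\max L_i$; (F2) $f$ is $\beta$-strongly convex, $\beta>0$; $w_*$ is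 the minimizer of $f$. Algorithm with stepsize $\alpha>0$: given $w(0)\in\mathbb R^{nd}$, $y(0)=1_n$; for $t\ge0$: $z_i(t)=w_i(t)/y_i(t)$, $x_i(t)=w_i(t)-\alpha\nabla f_i(z_i(t))$, $w_i(t+1)=\sum_jW_{ij}x_j(t)$, $y_i(t+1)=\sum_jW_{ij}y_j(t)$. $\bar w(t)=\frac1n\sum_iw_i(t)$, $\delta=\sup_{t\ge0}\max_i1/y_i(t)$. *)

(* Defs.v *)
From HB Require Import structures.
From mathcomp Require Import all_boot all_order all_algebra.
From mathcomp Require Import all_classical all_reals all_analysis.
Set Implicit Arguments. Unset Strict Implicit. Unset Printing Implicit Defensive.
Import Order.TTheory GRing.Theory Num.Theory.
Import numFieldNormedType.Exports.
Local Open Scope classical_set_scope.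
Local Open Scope ring_scope.

(* out-degree d_j = |{i : (j,i) in E}| ; E j i means edge (j,i) *)
Definition outdeg (n : nat) (E : rel 'I_n) (j : 'I_n) : nat := #|[set i | E j i]|.

Definition Wmx (R : realType) (n : nat) (E : rel 'I_n) : 'M[R]_n :=
  \matrix_(i, j) (if E j i then (outdeg E j)%:R^-1 else 0).

Definition Winf (R : realType) (n : nat) (pi : 'cV[R]_n) : 'M[R]_n :=
  pi *m const_mx 1.

Definition pinorm (R : realType) (n : nat) (pi x : 'cV[R]_n) : R :=
  Num.sqrt (\sum_i (x i 0) ^+ 2 / pi i 0).

Definition opnorm_pi (R : realType) (n : nat) (pi : 'cV[R]_n) (A : 'M[R]_n) : R :=
  sup [set r | exists x : 'cV[R]_n, pinorm pi x <= 1 /\ r = pinorm pi (A *m x)].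

Definition sigmaW (R : realType) (n : nat) (E : rel 'I_n) (pi : 'cV[R]_n) : R :=
  opnorm_pi pi (Wmx R E - Winf pi).

Definition enorm (R : realType) (d : nat) (v : 'rV[R]_d) : R :=
  Num.sqrt (\sum_k (v 0 k) ^+ 2).

(* ||x||_{pi (x) 1_d} on R^{nd}, x given blockwise *)
Definition blocknorm (R : realType) (n d : nat) (pi : 'cV[R]_n)
  (x : 'I_n -> 'rV[R]_d) : R :=
  Num.sqrt (\sum_i (enorm (x i)) ^+ 2 / pi i 0).

Definition grad (R : realType) (d : nat) (g : 'rV[R]_d -> R) (x : 'rV[R]_d)
  : 'rV[R]_d := \row_k ('d g x (delta_mx 0 k)).

Fixpoint yseq (R : realType) (n : nat) (E : rel 'I_n) (t : nat) : 'cV[R]_n :=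
  match t with
  | 0 => const_mx 1
  | t'.+1 => Wmx R E *m yseq R E t'
  end.

Fixpoint wseq (R : realType) (n d : nat) (E : rel 'I_n)
  (fi : 'I_n -> 'rV[R]_d -> R) (alpha : R) (w0 : 'I_n -> 'rV[R]_d) (t : nat)
  : 'I_n -> 'rV[R]_d :=
  match t with
  | 0 => w0
  | t'.+1 => fun i =>
      let w := wseq E fi alpha w0 t' in
      let y := yseq R E t' in
      \sum_j Wmx R E i j *:
         (w j - alpha *: grad (fi j) ((y j 0)^-1 *: w j))
  end.

Definition wbar (R : realType) (n d : nat) (w : 'I_n -> 'rV[R]_d) : 'rV[R]_d :=
  (n%:R)^-1 *: \sum_i w i.

Definition deltaY (R : realType) (n : nat) (E : rel 'I_n) : R :=
  sup [set r | exists (t : nat) (i : 'I_n), r = (yseq R E t i 0)^-1].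

Definition avgf (R : realType) (n d : nat) (fi : 'I_n -> 'rV[R]_d -> R)
  (x : 'rV[R]_d) : R := (n%:R)^-1 * \sum_i fi i x.

Definition strongly_convex (R : realType) (d : nat) (beta : R) (g : 'rV[R]_d -> R)
  : Prop :=
  forall (x y : 'rV[R]_d) (th : R), 0 <= th <= 1 ->
    g (th *: x + (1 - th) *: y) <=
      th * g x + (1 - th) * g y - beta / 2 * th * (1 - th) * (enorm (x - y)) ^+ 2.

(* Main.v *)
Require Import Defs.
From HB Require Import structures.
From mathcomp Require Import all_boot all_order all_algebra.
From mathcomp Require Import all_classical all_reals all_analysis.
From mathcomp Require Import ring lra.
Import Order.TTheory GRing.Theory Num.Theory.
Import numFieldNormedType.Exports.
Local Open Scope ring_scope.
Set Implicit Arguments. Unset Strict Implicit.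
Lemma CS (R : realType) (I : finType) (x y : I -> R) :
  (\sum_i x i * y i) ^+ 2 <= (\sum_i x i ^+ 2) * (\sum_i y i ^+ 2).
Proof.
set A := \sum_i x i ^+ 2; set B := \sum_i x i * y i; set C := \sum_i y i ^+ 2.
have C0 : 0 <= C by apply: sumr_ge0 => i _; exact: sqr_ge0.
have A0 : 0 <= A by apply: sumr_ge0 => i _; exact: sqr_ge0.
have [Ce|Cp] := eqVneq C 0.
  have y0 : forall i, y i = 0.
    move=> i; apply/eqP; rewrite -sqrf_eq0; apply/eqP.
    by apply: (psumr_eq0P (fun i _ => sqr_ge0 (y i)) Ce).
  rewrite /B (eq_bigr (fun _ => 0)); last by move=> i _; rewrite y0 mulr0.
  by rewrite big1 // expr0n /= mulr_ge0.
have Cgt : 0 < C by rewrite lt_def Cp C0.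
have E : \sum_i (x i * C - y i * B) ^+ 2 = C * (C * A - B ^+ 2).
  have -> : C * (C * A - B ^+ 2) = \sum_i (C ^+ 2 * x i ^+ 2 - (2 * C * B) * (x i * y i) + B ^+ 2 * y i ^+ 2).
    rewrite big_split /= sumrB -!mulr_sumr -/A -/B -/C; ring.
  by apply: eq_bigr => i _; ring.
have : 0 <= C * (C * A - B ^+ 2) by rewrite -E; apply: sumr_ge0 => i _; exact: sqr_ge0.
rewrite pmulr_rge0 // subr_ge0 => h.
by rewrite mulrC.
Qed.
Definition dot (R : realType) (d : nat) (u v : 'rV[R]_d) : R := \sum_k u 0 k * v 0 k.

Lemma dot_ge0 (R : realType) d (v : 'rV[R]_d) : 0 <= dot v v.
Proof. by apply: sumr_ge0 => i _; rewrite -expr2 sqr_ge0. Qed.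

Lemma enorm_sq (R : realType) d (v : 'rV[R]_d) : enorm v ^+ 2 = dot v v.
Proof.
rewrite /enorm sqr_sqrtr; last by apply: sumr_ge0 => i _; exact: sqr_ge0.
by apply: eq_bigr => i _; rewrite expr2.
Qed.

Lemma enorm_ge0 (R : realType) d (v : 'rV[R]_d) : 0 <= enorm v.
Proof. exact: sqrtr_ge0. Qed.

Lemma enormE (R : realType) d (v : 'rV[R]_d) : enorm v = Num.sqrt (dot v v).
Proof. by rewrite -enorm_sq sqrtr_sqr ger0_norm // enorm_ge0. Qed.

Lemma dotC (R : realType) d (u v : 'rV[R]_d) : dot u v = dot v u.
Proof. by apply: eq_bigr => i _; rewrite mulrC. Qed.

Lemma dotDl (R : realType) d (u v w : 'rV[R]_d) : dot (u + v) w = dot u w + dot v w.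
Proof. by rewrite /dot -big_split; apply: eq_bigr => i _; rewrite !mxE mulrDl. Qed.

Lemma dotNl (R : realType) d (u w : 'rV[R]_d) : dot (- u) w = - dot u w.
Proof. by rewrite /dot -sumrN; apply: eq_bigr => i _; rewrite !mxE mulNr. Qed.

Lemma dotBl (R : realType) d (u v w : 'rV[R]_d) : dot (u - v) w = dot u w - dot v w.
Proof. by rewrite dotDl dotNl. Qed.

Lemma dotZl (R : realType) d (k : R) (u w : 'rV[R]_d) : dot (k *: u) w = k * dot u w.
Proof. by rewrite /dot mulr_sumr; apply: eq_bigr => i _; rewrite !mxE mulrA. Qed.

Lemma dotDr (R : realType) d (u v w : 'rV[R]_d) : dot w (u + v) = dot w u + dot w v.
Proof. by rewrite ![dot w _]dotC dotDl. Qed.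
Lemma dotNr (R : realType) d (u w : 'rV[R]_d) : dot w (- u) = - dot w u.
Proof. by rewrite ![dot w _]dotC dotNl. Qed.
Lemma dotBr (R : realType) d (u v w : 'rV[R]_d) : dot w (u - v) = dot w u - dot w v.
Proof. by rewrite ![dot w _]dotC dotBl. Qed.
Lemma dotZr (R : realType) d (k : R) (u w : 'rV[R]_d) : dot w (k *: u) = k * dot w u.
Proof. by rewrite ![dot w _]dotC dotZl. Qed.

Lemma dot_sq_le (R : realType) d (u v : 'rV[R]_d) : dot u v ^+ 2 <= dot u u * dot v v.
Proof.
have e1 : dot u u = \sum_k u 0 k ^+ 2 by apply: eq_bigr => k _; rewrite expr2.
have e2 : dot v v = \sum_k v 0 k ^+ 2 by apply: eq_bigr => k _; rewrite expr2.
rewrite e1 e2; exact: (CS (fun k => u 0 k) (fun k => v 0 k)).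
Qed.

Lemma dot_abs_le (R : realType) d (u v : 'rV[R]_d) : `|dot u v| <= enorm u * enorm v.
Proof.
rewrite !enormE -sqrtrM ?dot_ge0 // -sqrtr_sqr ler_sqrt ?dot_sq_le //.
by apply: mulr_ge0; apply: dot_ge0.
Qed.

Lemma dot_le (R : realType) d (u v : 'rV[R]_d) : dot u v <= enorm u * enorm v.
Proof. exact: le_trans (ler_norm _) (dot_abs_le _ _). Qed.

Lemma enormD (R : realType) d (u v : 'rV[R]_d) : enorm (u + v) <= enorm u + enorm v.
Proof.
have h1 := enorm_ge0 u; have h2 := enorm_ge0 v; have h3 := enorm_ge0 (u + v).
rewrite -(ler_pXn2r (n := 2)) ?nnegrE ?addr_ge0 //.
rewrite enorm_sq dotDl !dotDr (dotC v u) sqrrD !enorm_sq mulr2n.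
have := dot_le u v.
move: (enorm u * enorm v) (dot u u) (dot u v) (dot v v) => a b c e. lra.
Qed.

Lemma enormZ (R : realType) d (k : R) (u : 'rV[R]_d) : enorm (k *: u) = `|k| * enorm u.
Proof.
by rewrite !enormE dotZl dotZr mulrA -expr2 sqrtrM ?sqr_ge0 // sqrtr_sqr.
Qed.

Lemma enormN (R : realType) d (u : 'rV[R]_d) : enorm (- u) = enorm u.
Proof. by rewrite -scaleN1r enormZ normrN normr1 mul1r. Qed.

Lemma enormBC (R : realType) d (u v : 'rV[R]_d) : enorm (u - v) = enorm (v - u).
Proof. by rewrite -enormN opprB. Qed.

Lemma enorm0 (R : realType) d : enorm (0 : 'rV[R]_d) = 0.
Proof. by rewrite -(scale0r 0) enormZ normr0 mul0r. Qed.

Lemma enorm_sum (R : realType) d (I : finType) (v : I -> 'rV[R]_d) :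
  enorm (\sum_i v i) <= \sum_i enorm (v i).
Proof.
elim/big_ind2: _ => //; first by rewrite enorm0.
by move=> a b c e h1 h2; apply: le_trans (enormD _ _) (lerD h1 h2).
Qed.
Lemma der_line (R : realType) d (f : 'rV[R]_d -> R) (x u : 'rV[R]_d) (s : R) :
  differentiable f (s *: u + x) ->
  is_derive s 1 (fun t => f (t *: u + x)) ('d f (s *: u + x) u).
Proof.
move=> df.
have ha : is_diff s (( *:%R^~ u) + cst x) (( *:%R^~ u) + 0) by exact: _.
have [da dv] := ha.
have e : (fun t => f (t *: u + x)) = f \o (( *:%R^~ u) + cst x) by [].
have dc : differentiable (f \o (( *:%R^~ u) + cst x)) s.
  by apply: differentiable_comp.
rewrite e; apply: DeriveDef; first by apply/derivable1_diffP.
rewrite deriveE // diff_comp // dv.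
change ('d f (s *: u + x) ((( *:%R^~ u) + 0) 1) = 'd f (s *: u + x) u).
congr ('d f _ _).
by rewrite !fctE /= scale1r addr0.
Qed.

Lemma diff_grad (R : realType) d (f : 'rV[R]_d -> R) (z u : 'rV[R]_d) :
  differentiable f z -> 'd f z u = dot (grad f z) u.
Proof.
move=> df.
rewrite {1}(row_sum_delta u) linear_sum /dot; apply: eq_bigr => k _.
by rewrite linearZ /= /grad mxE mulrC.
Qed.
Lemma lip_dot (R : realType) d (G : 'rV[R]_d -> 'rV[R]_d) (L : R) :
  (forall a b, enorm (G a - G b) <= L * enorm (a - b)) ->
  forall x u (t : R), 0 < t ->
  `|dot (G (t *: u + x)) u - dot (G x) u| <= L * t * dot u u.
Proof.
move=> HL x u t t0; rewrite -dotBl.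
apply: le_trans (dot_abs_le _ _) _.
have hb := HL (t *: u + x) x; rewrite addrK enormZ gtr0_norm // in hb.
apply: le_trans (ler_wpM2r (enorm_ge0 u) hb) _.
rewrite [X in _ <= X](_ : _ = L * (t * enorm u) * enorm u) //.
rewrite -enorm_sq; ring.
Qed.

Lemma descent (R : realType) d (F : 'rV[R]_d -> R) (G : 'rV[R]_d -> 'rV[R]_d) (L : R) :
  (forall (x u : 'rV[R]_d) (s : R), is_derive s 1 (fun t => F (t *: u + x)) (dot (G (s *: u + x)) u)) ->
  (forall a b, enorm (G a - G b) <= L * enorm (a - b)) ->
  forall x y, F y <= F x + dot (G x) (y - x) + L / 2 * dot (y - x) (y - x).
Proof.
move=> HD HL x y.
set u := y - x; set c := dot (G x) u; set k := L / 2 * dot u u.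
pose h := (fun t => F (t *: u + x)) - (c \*: id) - (k \*: (id * id)).
have hd : forall t, is_derive t (1:R) h (dot (G (t *: u + x)) u - c *: 1 - k *: (t *: 1 + t *: 1)).
  move=> t; apply: is_deriveB.
have [c0 + hm] := MVT (@ltr01 R) (fun t _ => hd t) (derivable_within_continuous (fun t _ => @ex_derive _ _ _ _ _ _ _ (hd t))).
rewrite in_itv /= => /andP[c0a c0b].
have e1 : h 1 = F y - c - k.
  change (F (1 *: u + x) - c *: (1:R) - k *: ((1:R) * 1) = F y - c - k).
  by rewrite scale1r subrK mulr1 /GRing.scale /= !mulr1.
have e0 : h 0 = F x.
  change (F (0 *: u + x) - c *: (0:R) - k *: ((0:R) * 0) = F x).
  by rewrite scale0r add0r /GRing.scale /= !mulr0 !subr0.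
have key : dot (G (c0 *: u + x)) u - c <= L * c0 * dot u u.
  exact: le_trans (ler_norm _) (lip_dot HL x u c0a).
have : h 1 - h 0 <= 0.
  have E : forall a b : R, a *: b = a * b by [].
  rewrite hm subr0 mulr1 /k !E !mulr1.
  move: key.
  move: (dot (G (c0 *: u + x)) u) (dot u u) => a b; clear -c0a; lra.
rewrite e1 e0 /c /k -/u; lra.
Qed.
Lemma small_le0 (R : realType) (D K : R) : 0 <= K ->
  (forall s, 0 < s -> s <= 1 -> D <= K * s) -> D <= 0.
Proof.
move=> K0 H; rewrite leNgt; apply/negP => D0.
have p : 0 < D + K + 1 by lra.
have := H (D / (D + K + 1)).
rewrite divr_gt0 // ler_pdivrMr // mul1r => /(_ isT) /(_ ltac:(lra)).
rewrite mulrA ler_pdivlMr // => h.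
have : D * D + D <= 0.
  have -> : D * D + D = D * (D + K + 1) - K * D by ring.
  by rewrite subr_le0.
have : 0 < D * D + D by rewrite addr_gt0 // mulr_gt0.
lra.
Qed.

Lemma sc_lower (R : realType) d (F : 'rV[R]_d -> R) (G : 'rV[R]_d -> 'rV[R]_d) (L beta : R) :
  (forall (x u : 'rV[R]_d) (s : R), is_derive s 1 (fun t => F (t *: u + x)) (dot (G (s *: u + x)) u)) ->
  (forall a b, enorm (G a - G b) <= L * enorm (a - b)) ->
  strongly_convex beta F ->
  forall x y, F x + dot (G x) (y - x) + beta / 2 * dot (y - x) (y - x) <= F y.
Proof.
move=> HD HL SC x y.
set u := y - x; set c := dot (G x) u; set N := dot u u.
have N0 : 0 <= N by apply: dot_ge0.
suff : c + beta / 2 * N - F y + F x <= 0 by lra.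
apply: (@small_le0 _ _ ((`|L| + `|beta| / 2) * N)).
  by apply: mulr_ge0 => //; apply: addr_ge0 => //; apply: divr_ge0.
move=> s s0 s1.
have := SC y x s; rewrite s1 ltW //= => /(_ isT).
have -> : s *: y + (1 - s) *: x = s *: u + x.
  by apply/rowP => k; rewrite /u !mxE; ring.
rewrite -/u enorm_sq -/N => hsc.
pose g := fun t => F (t *: u + x).
have hd : forall t, is_derive t (1:R) g (dot (G (t *: u + x)) u) by move=> t; exact: HD.
have [xi + hm] := MVT s0 (fun t _ => hd t) (derivable_within_continuous (fun t _ => @ex_derive _ _ _ _ _ _ _ (hd t))).
rewrite in_itv /= => /andP[xa xb].
rewrite /g scale0r add0r subr0 in hm.
have hl := lip_dot HL x u xa.
rewrite -/c -/N in hl.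
have hl2 : dot (G (xi *: u + x)) u >= c - `|L| * s * N.
  have : L * xi * N <= `|L| * s * N.
    apply: ler_wpM2r => //; apply: le_trans (ler_wpM2r (ltW xa) (ler_norm L)) _.
    by apply: ler_wpM2l => //; apply: ltW.
  move: hl; move: (dot (G (xi *: u + x)) u) => a.
  rewrite ler_norml => /andP[h1 h2] h3; lra.
have e : F (s *: u + x) - F x = dot (G (xi *: u + x)) u * s by [].
have h4 : dot (G (xi *: u + x)) u <= F y - F x - beta / 2 * (1 - s) * N.
  rewrite -(ler_pM2r s0) -e.
  move: hsc; move: (F (s *: u + x)) (F x) (F y) => b fx fy; lra.
have h5 : beta / 2 * s * N <= `|beta| / 2 * s * N.
  apply: ler_wpM2r => //; apply: ler_wpM2r; first exact: ltW.
  by apply: ler_wpM2r; [lra | exact: ler_norm].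
have -> : (`|L| + `|beta| / 2) * N * s = `|L| * s * N + `|beta| / 2 * s * N by ring.
move: h4 h5 hl2; move: (dot (G (xi *: u + x)) u) (F x) (F y) (`|L| * s * N) (`|beta| / 2 * s * N) => a fx fy p q h4 h5 hl2.
lra.
Qed.
Lemma cocoercive (R : realType) d (F : 'rV[R]_d -> R) (G : 'rV[R]_d -> 'rV[R]_d) (L beta : R) :
  (forall (x u : 'rV[R]_d) (s : R), is_derive s 1 (fun t => F (t *: u + x)) (dot (G (s *: u + x)) u)) ->
  (forall a b, enorm (G a - G b) <= L * enorm (a - b)) ->
  strongly_convex beta F ->
  forall x y, (L - beta) * dot (G y - G x - beta *: (y - x)) (y - x) >=
     dot (G y - G x - beta *: (y - x)) (G y - G x - beta *: (y - x)).
Proof.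
move=> HD HL SC x y; set u := y - x; set D := G y - G x - beta *: u.
have eg : G y - G x = D + beta *: u by rewrite /D subrK.
have eu : y = u + x by rewrite /u subrK.
have yu : y - x = u by rewrite eu addrK.
clearbody D; clearbody u.
have D1 := descent HD HL; have D2 := sc_lower HD HL SC.
have key : forall t, 0 < t -> - dot D u + 2 * t * dot D D <= (L - beta) * t ^+ 2 * dot D D.
  move=> t t0.
  have i1 := D2 x (y - t *: D); have i2 := D1 y (y - t *: D).
  have i3 := D2 y (x + t *: D); have i4 := D1 x (x + t *: D).
  have e1 : y - t *: D - x = u - t *: D by rewrite ?eu; apply/rowP => k; rewrite !mxE; ring.
  have e2 : y - t *: D - y = - (t *: D) by rewrite ?eu; apply/rowP => k; rewrite !mxE; ring.
  have e3 : x + t *: D - y = t *: D - u by rewrite ?eu; apply/rowP => k; rewrite !mxE; ring.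
  have e4 : x + t *: D - x = t *: D by rewrite ?eu; apply/rowP => k; rewrite !mxE; ring.
  rewrite e1 in i1; rewrite e2 in i2; rewrite e3 in i3; rewrite e4 in i4.
  rewrite !(dotBl, dotBr, dotZl, dotZr, dotNl, dotNr) in i1 i2 i3 i4.
  have r1 : dot (G y) D - dot (G x) D = dot D D + beta * dot u D.
    by rewrite -dotBl eg dotDl dotZl.
  have r2 : dot (G y) u - dot (G x) u = dot D u + beta * dot u u.
    by rewrite -dotBl eg dotDl dotZl.
  have r3 := dotC u D.
  move: i1 i2 i3 i4 r1 r2 r3.
  move: (F x) (F y) (F (y - t *: D)) (F (x + t *: D)) (dot (G y) D) (dot (G x) D)
     (dot (G y) u) (dot (G x) u) (dot D D) (dot u D) (dot D u) (dot u u) => a b c e f g h i j k l m.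
  move=> i1 i2 i3 i4 r1 r2 r3.
  have ef : f = j + beta * k + g by rewrite -r1 subrK.
  have eh : h = l + beta * m + i by rewrite -r2 subrK.
  subst f h k. rewrite expr2. clear -i1 i2 i3 i4. nra.
have Q0 : 0 <= dot D D by apply: dot_ge0.
have [Mp|Mn] := ltrP 0 (L - beta).
  have := key (L - beta)^-1; rewrite invr_gt0 Mp => /(_ isT).
  rewrite expr2 !mulrA mulfV ?gt_eqF // mul1r.
  move: (dot D u) (dot D D) (L - beta) Mp Q0 => a b M Mp Q0 h.
  have : b / M <= a.
    rewrite -mulrA in h; rewrite mulrC; move: h; move: (M^-1 * b) => q; lra.
  by rewrite ler_pdivrMr // [a * M]mulrC.
have QD : dot D D = 0.
  apply/eqP; rewrite eq_le Q0 andbT.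
  have h : forall t, 0 < t -> 2 * t * dot D D <= dot D u.
    move=> t t0; have := key t t0.
    have : (L - beta) * t ^+ 2 * dot D D <= 0.
      by rewrite -mulrA mulr_le0_ge0 // mulr_ge0 // sqr_ge0.
    move: ((L - beta) * t ^+ 2 * dot D D) => z; lra.
  rewrite leNgt; apply/negP => Qp.
  move: h Qp; move: (dot D u) (dot D D) => P Q h Qp.
  have np : 0 < `|P| + 1 by apply: ltr_wpDl (normr_ge0 _) ltr01.
  have := h ((`|P| + 1) / (2 * Q)) (divr_gt0 np (mulr_gt0 (ltr0Sn _ 1) Qp)).
  have -> : 2 * ((`|P| + 1) / (2 * Q)) * Q = `|P| + 1.
    by field; rewrite gt_eqF.
  have := ler_norm P; move: `|P| => a; lra.
have P0 : 0 <= dot D u by have := key 1 ltr01; rewrite QD !mulr0; lra.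
rewrite QD.
have [Mz|Mneg] := eqVneq (L - beta) 0; first by rewrite Mz mul0r.
have U0 : dot u u = 0.
  have h1 := D1 x y; have h2 := D2 x y; rewrite yu in h1 h2.
  have Un := dot_ge0 u.
  have Mlt : L - beta < 0 by rewrite lt_neqAle Mneg Mn.
  move: h1 h2 Un Mlt; move: (F x) (F y) (dot (G x) u) (dot u u) => a b c e.
  move=> h1 h2 Un Mlt; apply/eqP; rewrite eq_le Un andbT; nra.
have : `|dot D u| <= 0.
  apply: le_trans (dot_abs_le _ _) _.
  by rewrite (enormE u) U0 sqrtr0 mulr0.
rewrite normr_le0 => /eqP ->; by rewrite mulr0.
Qed.
Lemma scal_contr (R : realType) (L beta alpha P Q U : R) :
  0 < beta -> 0 <= L -> 0 < alpha -> alpha <= 2 / (L + beta) -> 0 <= Q -> 0 <= U ->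
  (L - beta) * (P - beta * U) >= Q - 2 * beta * P + beta ^+ 2 * U ->
  U - 2 * alpha * P + alpha ^+ 2 * Q <= (1 - beta * L / (L + beta) * alpha) ^+ 2 * U /\
  0 <= 1 - beta * L / (L + beta) * alpha.
Proof.
move=> b0 L0 a0 aL Q0 U0 H.
set S := L + beta.
have S0 : 0 < S by rewrite /S; lra.
have aS : alpha * S <= 2 by rewrite -ler_pdivlMr.
set g := beta * L / S.
have gS : g * S = beta * L by rewrite /g divfK ?gt_eqF.
have g0 : 0 <= g by apply: divr_ge0; [apply: mulr_ge0 => //; exact: ltW | exact: ltW].
have h1 : S * P >= Q + g * S * U.
  rewrite gS /S; move: H; clear; nra.
have f1 : alpha * (Q + g * S * U) <= alpha * (S * P) by apply: ler_wpM2l => //; exact: ltW.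
have f2 : (alpha * Q) * (alpha * S) <= (alpha * Q) * 2.
  by apply: ler_wpM2l => //; apply: mulr_ge0 => //; exact: ltW.
have f3 : 0 <= g ^+ 2 * alpha ^+ 2 * S * U.
  apply: mulr_ge0 => //; apply: mulr_ge0; last exact: ltW.
  by apply: mulr_ge0; exact: sqr_ge0.
split.
  suff: S * (U - 2 * alpha * P + alpha ^+ 2 * Q) <= S * ((1 - g * alpha) ^+ 2 * U) by rewrite ler_pM2l.
  move: f1 f2 f3; move: (g * S) => gs f1 f2 f3. nra.
have g1 : (beta * L) * (alpha * S) <= (beta * L) * 2.
  by apply: ler_wpM2l => //; apply: mulr_ge0 => //; exact: ltW.
have : g * alpha * (S * S) <= S * S.
  have -> : g * alpha * (S * S) = (beta * L) * (alpha * S) by rewrite -gS; ring.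
  apply: le_trans g1 _.
  rewrite /S; move: L0 b0; clear; nra.
rewrite -{2}(mul1r (S * S)) ler_pM2r ?mulr_gt0 //; lra.
Qed.
Lemma gd_contract (R : realType) d (F : 'rV[R]_d -> R) (G : 'rV[R]_d -> 'rV[R]_d) (L beta alpha : R) :
  (forall (x u : 'rV[R]_d) (s : R), is_derive s 1 (fun t => F (t *: u + x)) (dot (G (s *: u + x)) u)) ->
  (forall a b, enorm (G a - G b) <= L * enorm (a - b)) ->
  strongly_convex beta F ->
  0 < beta -> 0 <= L -> 0 < alpha -> alpha <= 2 / (L + beta) ->
  forall x y, enorm ((x - y) - alpha *: (G x - G y)) <=
     (1 - beta * L / (L + beta) * alpha) * enorm (x - y).
Proof.
move=> HD HL SC b0 L0 a0 aL x y.
have C := cocoercive HD HL SC x y.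
set u := y - x in C *. set g := G y - G x in C.
have e1 : (x - y) - alpha *: (G x - G y) = - (u - alpha *: g).
  by rewrite /u /g; apply/rowP => k; rewrite !mxE; ring.
have e2 : x - y = - u by rewrite /u opprB.
rewrite e1 e2 !enormN.
clearbody g u.
rewrite !(dotBl, dotBr, dotZl, dotZr) (dotC u g) in C.
have C' : (L - beta) * (dot g u - beta * dot u u) >= dot g g - 2 * beta * dot g u + beta ^+ 2 * dot u u.
  move: C; move: (dot g u) (dot g g) (dot u u) => P Q U; clear; nra.
have [h1 h2] := scal_contr b0 L0 a0 aL (dot_ge0 g) (dot_ge0 u) C'.
move: h2; set c := 1 - beta * L / (L + beta) * alpha => h2.
rewrite enormE (enormE u) -(ger0_norm h2) -sqrtr_sqr -sqrtrM ?sqr_ge0 // ler_sqrt; last first.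
  by apply: mulr_ge0; [apply: sqr_ge0 | apply: dot_ge0].
rewrite !(dotBl, dotBr, dotZl, dotZr) (dotC u g).
move: h1; rewrite -/c; clearbody c; move: (dot g u) (dot g g) (dot u u) => P Q U; clear; nra.
Qed.
Lemma sum_le_pi (R : realType) n (pi : 'cV[R]_n) (a : 'I_n -> R) :
  (forall i, 0 < pi i 0) -> \sum_i pi i 0 = 1 ->
  \sum_j a j <= Num.sqrt (\sum_j a j ^+ 2 / pi j 0).
Proof.
move=> hp hs.
have := CS (fun j => a j / Num.sqrt (pi j 0)) (fun j => Num.sqrt (pi j 0)).
have e1 : \sum_i a i / Num.sqrt (pi i 0) * Num.sqrt (pi i 0) = \sum_j a j.
  by apply: eq_bigr => i _; rewrite divfK // gt_eqF // sqrtr_gt0.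
have e2 : \sum_i (a i / Num.sqrt (pi i 0)) ^+ 2 = \sum_j a j ^+ 2 / pi j 0.
  by apply: eq_bigr => i _; rewrite expr_div_n sqr_sqrtr // ltW.
have e3 : \sum_i Num.sqrt (pi i 0) ^+ 2 = 1.
  by rewrite -hs; apply: eq_bigr => i _; rewrite sqr_sqrtr // ltW.
rewrite e1 e2 e3 mulr1 => h.
apply: le_trans (ler_norm _) _.
by rewrite -sqrtr_sqr ler_sqrt //; apply: sumr_ge0 => i _; rewrite divr_ge0 ?sqr_ge0 // ltW.
Qed.

Lemma pinorm_ge0 (R : realType) n (pi x : 'cV[R]_n) : 0 <= pinorm pi x.
Proof. exact: sqrtr_ge0. Qed.

Lemma pinormZ (R : realType) n (pi x : 'cV[R]_n) (c : R) :
  (forall i, 0 < pi i 0) -> pinorm pi (c *: x) = `|c| * pinorm pi x.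
Proof.
move=> hp; rewrite /pinorm.
have -> : \sum_i ((c *: x) i 0) ^+ 2 / pi i 0 = c ^+ 2 * \sum_i (x i 0) ^+ 2 / pi i 0.
  by rewrite mulr_sumr; apply: eq_bigr => i _; rewrite mxE exprMn mulrA.
by rewrite sqrtrM ?sqr_ge0 // sqrtr_sqr.
Qed.

Lemma pinorm_eq0 (R : realType) n (pi x : 'cV[R]_n) :
  (forall i, 0 < pi i 0) -> pinorm pi x = 0 -> x = 0.
Proof.
move=> hp /eqP; rewrite sqrtr_eq0 => h.
have h0 : \sum_i (x i 0) ^+ 2 / pi i 0 = 0.
  apply/eqP; rewrite eq_le h /=; apply: sumr_ge0 => i _.
  by rewrite divr_ge0 ?sqr_ge0 // ltW.
apply/matrixP => i j; rewrite (ord1 j) mxE.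
have := psumr_eq0P (fun i _ => divr_ge0 (sqr_ge0 (x i 0)) (ltW (hp i))) h0 (i := i) isT.
by move/eqP; rewrite mulf_eq0 invr_eq0 (gt_eqF (hp i)) orbF sqrf_eq0 => /eqP.
Qed.

Lemma pinorm0 (R : realType) n (pi : 'cV[R]_n) : pinorm pi 0 = 0.
Proof.
rewrite /pinorm big1 ?sqrtr0 // => i _; by rewrite mxE expr0n /= mul0r.
Qed.

Lemma opnorm_set_ub (R : realType) n (pi : 'cV[R]_n) (A : 'M[R]_n) :
  (forall i, 0 < pi i 0) -> \sum_i pi i 0 = 1 ->
  has_ubound [set r | exists x : 'cV[R]_n, pinorm pi x <= 1 /\ r = pinorm pi (A *m x)].
Proof.
move=> hp hs.
exists (Num.sqrt (\sum_i (\sum_j `|A i j|) ^+ 2 / pi i 0)) => r [x [hx ->]].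
have xb : forall j, `|x j 0| <= 1.
  move=> j.
  have pj : pi j 0 <= 1.
    rewrite -hs (bigD1 j) //= lerDl; apply: sumr_ge0 => i _; exact: ltW.
  have : (x j 0) ^+ 2 / pi j 0 <= 1.
    apply: le_trans _ (_ : \sum_i (x i 0) ^+ 2 / pi i 0 <= 1).
      rewrite (bigD1 j) //= lerDl; apply: sumr_ge0 => i _.
      by rewrite divr_ge0 ?sqr_ge0 // ltW.
    move: hx; rewrite /pinorm => hx.
    have S0 : 0 <= \sum_i (x i 0) ^+ 2 / pi i 0.
      by apply: sumr_ge0 => i _; rewrite divr_ge0 ?sqr_ge0 // ltW.
    rewrite -(sqr_sqrtr S0) expr2 -(mulr1 1).
    by apply: ler_pM => //; apply: sqrtr_ge0.
  rewrite ler_pdivrMr // mul1r => h.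
  have : `|x j 0| ^+ 2 <= 1 by rewrite real_normK ?num_real //; exact: le_trans h pj.
  move: (`|x j 0|) (normr_ge0 (x j 0)) => a a0 h2; nra.
rewrite /pinorm ler_sqrt; last first.
  by apply: sumr_ge0 => i _; rewrite divr_ge0 ?sqr_ge0 // ltW.
apply: ler_sum => i _; rewrite ler_pM2r ?invr_gt0 //.
rewrite -real_normK ?num_real // ler_pXn2r ?nnegrE //; last first.
  by apply: sumr_ge0 => j _.
rewrite mxE; apply: le_trans (ler_norm_sum _ _ _) _.
apply: ler_sum => j _; rewrite normrM -{2}(mulr1 `|A i j|).
by apply: ler_wpM2l.
Qed.

Lemma opnorm_ge0 (R : realType) n (pi : 'cV[R]_n) (A : 'M[R]_n) :
  (forall i, 0 < pi i 0) -> \sum_i pi i 0 = 1 -> 0 <= opnorm_pi pi A.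
Proof.
move=> hp hs; apply: (ub_le_sup (opnorm_set_ub A hp hs)).
exists 0; split; first by rewrite pinorm0.
by rewrite mulmx0 pinorm0.
Qed.

Lemma opnorm_le (R : realType) n (pi : 'cV[R]_n) (A : 'M[R]_n) :
  (forall i, 0 < pi i 0) -> \sum_i pi i 0 = 1 ->
  forall x, pinorm pi (A *m x) <= opnorm_pi pi A * pinorm pi x.
Proof.
move=> hp hs x.
have [p0|pn] := eqVneq (pinorm pi x) 0.
  by rewrite (pinorm_eq0 hp p0) mulmx0 pinorm0 mulr0.
have pp : 0 < pinorm pi x by rewrite lt_def pn pinorm_ge0.
have : pinorm pi (A *m ((pinorm pi x)^-1 *: x)) <= opnorm_pi pi A.
  apply: (ub_le_sup (opnorm_set_ub A hp hs)); exists ((pinorm pi x)^-1 *: x); split => //.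
  by rewrite pinormZ // ger0_norm ?invr_ge0 ?pinorm_ge0 // mulVf.
by rewrite -scalemxAr pinormZ // ger0_norm ?invr_ge0 ?pinorm_ge0 // ler_pdivrMl // mulrC.
Qed.
Lemma W_ge0 (R : realType) n (E : rel 'I_n) i j : 0 <= Wmx R E i j.
Proof. by rewrite mxE; case: (E j i) => //; rewrite invr_ge0. Qed.

Lemma colsum (R : realType) n (E : rel 'I_n) :
  (forall i, E i i) -> forall j, \sum_i Wmx R E i j = 1.
Proof.
move=> hE j.
rewrite (eq_bigr (fun i => if E j i then (outdeg E j)%:R^-1 else 0)); last by move=> i _; rewrite mxE.
rewrite -big_mkcond /= sumr_const.
have -> : #|E j| = outdeg E j.
  rewrite /outdeg; apply: eq_card => i.
  by apply/idP/idP; rewrite in_setE.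
have p : (0 < outdeg E j)%N.
  rewrite /outdeg; apply/card_gt0P; exists j. rewrite in_setE /=. exact: hE.
by rewrite -[(outdeg E j)%:R^-1 *+ _]mulr_natr mulVf // pnatr_eq0 -lt0n.
Qed.

Lemma ysum (R : realType) n (E : rel 'I_n) :
  (forall i, E i i) -> forall t, \sum_i yseq R E t i 0 = n%:R.
Proof.
move=> hE; elim=> [|t IH] /=.
  by rewrite (eq_bigr (fun _ => 1)) ?sumr_const ?card_ord // => i _; rewrite mxE.
rewrite (eq_bigr (fun i => \sum_j Wmx R E i j * yseq R E t j 0)); last by move=> i _; rewrite mxE.
rewrite exchange_big /= -IH; apply: eq_bigr => j _.
by rewrite -mulr_suml colsum // mul1r.
Qed.

Lemma y_ge_pi (R : realType) n (E : rel 'I_n) (pi : 'cV[R]_n) :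
  Wmx R E *m pi = pi -> (forall i, 0 < pi i 0) -> \sum_i pi i 0 = 1 ->
  forall t i, pi i 0 <= yseq R E t i 0.
Proof.
move=> hW hp hs; elim=> [|t IH] i /=.
  rewrite mxE -hs (bigD1 i) //= lerDl; apply: sumr_ge0 => k _; exact: ltW.
rewrite -{1}hW !mxE; apply: ler_sum => j _.
by apply: ler_wpM2l; [exact: W_ge0 | exact: IH].
Qed.

Lemma e_step (R : realType) n (E : rel 'I_n) (pi : 'cV[R]_n) :
  (forall i, E i i) -> Wmx R E *m pi = pi -> \sum_i pi i 0 = 1 -> forall t,
  yseq R E t.+1 - n%:R *: pi = (Wmx R E - Winf pi) *m (yseq R E t - n%:R *: pi).
Proof.
move=> hE hW hs t /=.
rewrite mulmxBl /Winf -mulmxA.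
have -> : const_mx 1 *m (yseq R E t - n%:R *: pi) = 0 :> 'M[R]_(1, 1).
  apply/matrixP => a b; rewrite (ord1 a) (ord1 b) !mxE.
  rewrite (eq_bigr (fun j => yseq R E t j 0 - n%:R * pi j 0)); last first.
    by move=> j _; rewrite !mxE mul1r.
  by rewrite sumrB ysum // -mulr_sumr hs mulr1 subrr.
by rewrite mulmx0 subr0 mulmxBr -scalemxAr hW.
Qed.

Lemma e_bound (R : realType) n (E : rel 'I_n) (pi : 'cV[R]_n) :
  (forall i, E i i) -> Wmx R E *m pi = pi -> (forall i, 0 < pi i 0) -> \sum_i pi i 0 = 1 ->
  forall t, pinorm pi (yseq R E t - n%:R *: pi) <=
    sigmaW E pi ^+ t * pinorm pi (const_mx 1 - n%:R *: pi).
Proof.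
move=> hE hW hp hs; elim=> [|t IH]; first by rewrite expr0 mul1r.
rewrite e_step // exprS -mulrA.
apply: le_trans (opnorm_le _ hp hs _) _.
apply: ler_wpM2l => //; exact: opnorm_ge0.
Qed.

Lemma delta_ub (R : realType) n (E : rel 'I_n) (pi : 'cV[R]_n) :
  Wmx R E *m pi = pi -> (forall i, 0 < pi i 0) -> \sum_i pi i 0 = 1 ->
  forall t i, (yseq R E t i 0)^-1 <= deltaY R E.
Proof.
move=> hW hp hs t i.
have hy := y_ge_pi hW hp hs.
have ub : has_ubound [set r | exists (t : nat) (i : 'I_n), r = (yseq R E t i 0)^-1].
  exists (\sum_k (pi k 0)^-1) => r [t' [i' ->]].
  apply: le_trans (_ : (pi i' 0)^-1 <= _).
    by rewrite lef_pV2 ?posrE // ?hy //; apply: lt_le_trans (hp i') (hy t' i').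
  rewrite (bigD1 i') //= lerDl; apply: sumr_ge0 => k _; rewrite invr_ge0; exact: ltW.
by apply: (ub_le_sup ub); exists t, i.
Qed.
Lemma bigmax_ge (R : realType) n (Li : 'I_n -> R) i : Li i <= \big[Num.max/0]_j Li j.
Proof. by rewrite (bigD1 i) //= le_max lexx. Qed.

Lemma bigmax_ge0 (R : realType) n (Li : 'I_n -> R) : 0 <= \big[Num.max/0]_j Li j.
Proof. by elim/big_rec: _ => // i x _ hx; rewrite le_max hx orbT. Qed.

Lemma dot_suml (R : realType) d (I : finType) (v : I -> 'rV[R]_d) w :
  dot (\sum_i v i) w = \sum_i dot (v i) w.
Proof.
rewrite /dot (eq_bigr (fun k => \sum_i v i 0 k * w 0 k)); last first.
  by move=> k _; rewrite summxE mulr_suml.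
by rewrite exchange_big.
Qed.

Lemma avg_derive (R : realType) n d (fi : 'I_n -> 'rV[R]_d -> R) :
  (forall i x, differentiable (fi i) x) ->
  forall (x u : 'rV[R]_d) (s : R), is_derive s 1 (fun t => avgf fi (t *: u + x))
     (dot (n%:R^-1 *: \sum_i grad (fi i) (s *: u + x)) u).
Proof.
move=> hd x u s.
have e : (fun t => avgf fi (t *: u + x)) = (n%:R^-1) \*: (\sum_i (fun t => fi i (t *: u + x))).
  apply/funext => t /=; rewrite /avgf fct_sumE //.
rewrite e; apply: is_derive_eq.
  apply: is_deriveZ; apply: is_derive_sum => i; exact: der_line.
rewrite dotZl dot_suml; congr (_ * _); apply: eq_bigr => i _.
exact: diff_grad.
Qed.

Lemma avg_lip (R : realType) n d (fi : 'I_n -> 'rV[R]_d -> R) (Li : 'I_n -> R) :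
  (forall i x y, enorm (grad (fi i) x - grad (fi i) y) <= Li i * enorm (x - y)) ->
  forall a b, enorm (n%:R^-1 *: \sum_i grad (fi i) a - n%:R^-1 *: \sum_i grad (fi i) b)
     <= \big[Num.max/0]_i Li i * enorm (a - b).
Proof.
move=> hL a b.
rewrite -scalerBr -sumrB enormZ ger0_norm ?invr_ge0 //.
apply: le_trans (ler_wpM2l _ (enorm_sum _)) _; first by rewrite invr_ge0.
apply: le_trans (ler_wpM2l _ (ler_sum _ (fun i _ => le_trans (hL i a b) (ler_wpM2r (enorm_ge0 _) (bigmax_ge Li i))))) _.
  by rewrite invr_ge0.
rewrite sumr_const card_ord -[(_ * _) *+ n]mulr_natl mulrA.
have [n0|np] := eqVneq n 0%N.
  have -> : n%:R^-1 = 0 :> R by rewrite n0 invr0.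
  rewrite !mul0r.
  by apply: mulr_ge0; [exact: bigmax_ge0 | exact: enorm_ge0].
by rewrite mulVf ?mul1r // pnatr_eq0.
Qed.

Lemma grad_min (R : realType) d (F : 'rV[R]_d -> R) (G : 'rV[R]_d -> 'rV[R]_d) (L : R) ws :
  (forall (x u : 'rV[R]_d) (s : R), is_derive s 1 (fun t => F (t *: u + x)) (dot (G (s *: u + x)) u)) ->
  (forall a b, enorm (G a - G b) <= L * enorm (a - b)) -> 0 <= L ->
  (forall w, F ws <= F w) -> enorm (G ws) = 0.
Proof.
move=> HD HL L0 hmin.
set s := (L + 1)^-1.
have s0 : 0 < s by rewrite invr_gt0; lra.
have sL : s * L <= 1.
  rewrite /s ler_pdivrMl; lra.
have h := descent HD HL ws (ws - s *: G ws).
have e : ws - s *: G ws - ws = - (s *: G ws) by rewrite addrAC subrr add0r.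
rewrite e dotNr dotNl dotNr opprK !dotZl !dotZr in h.
have hQ : dot (G ws) (G ws) <= 0.
  have := hmin (ws - s *: G ws).
  have Q0 := dot_ge0 (G ws).
  move: h Q0; move: (F ws) (F (ws - s *: G ws)) (dot (G ws) (G ws)) => a b Q h1 Q0 h2.
  have h3 : s * Q <= L / 2 * (s * (s * Q)) by lra.
  have h4 : L / 2 * (s * (s * Q)) <= s * Q / 2.
    have -> : L / 2 * (s * (s * Q)) = (s * L) * (s * Q) / 2 by ring.
    rewrite ler_pM2r ?invr_gt0 // -{2}(mul1r (s * Q)); apply: ler_wpM2r => //.
    by apply: mulr_ge0 => //; exact: ltW.
  have : s * Q <= 0 by lra.
  by rewrite pmulr_rle0.
rewrite enormE.
have -> : dot (G ws) (G ws) = 0 by apply/eqP; rewrite eq_le hQ dot_ge0.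
by rewrite sqrtr0.
Qed.
Lemma vec_id1 (R : realType) d (a b c g h : 'rV[R]_d) (al : R) :
  a - al *: b - c = ((a - c) - al *: (g - h)) + (al *: (g - b) - al *: h).
Proof. by apply/rowP => k; rewrite !mxE; ring. Qed.

Lemma vec_id2 (R : realType) d (wb v : 'rV[R]_d) (yy q : R) : yy != 0 ->
  wb - yy^-1 *: v = yy^-1 *: ((q *: wb - v) + (yy - q) *: wb).
Proof. by move=> h; apply/rowP => k; rewrite !mxE; field. Qed.

Unset Implicit Arguments.
Theorem proposition6p2 (R : realType) (n d : nat) (E : rel 'I_n)
  (pi : 'cV[R]_n) (fi : 'I_n -> 'rV[R]_d -> R) (Li : 'I_n -> R)
  (beta alpha : R) (wstar : 'rV[R]_d) (w0 : 'I_n -> 'rV[R]_d) :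
  (* graph: self-loops and strong connectivity *)
  (forall i, E i i) ->
  (forall i j, connect E i j) ->
  (* pi: W pi = pi, pi_i > 0, sum pi_i = 1 *)
  Wmx R E *m pi = pi ->
  (forall i, 0 < pi i 0) ->
  \sum_i pi i 0 = 1 ->
  (* (F1) *)
  (forall i x, differentiable (fi i) x) ->
  (forall i x y, enorm (grad (fi i) x - grad (fi i) y) <= Li i * enorm (x - y)) ->
  (* (F2) *)
  0 < beta ->
  strongly_convex beta (avgf fi) ->
  (forall w, avgf fi wstar <= avgf fi w) ->
  let L := \big[Num.max/0]_i Li i in
  let gamma := beta * L / (L + beta) in
  0 < alpha -> alpha <= 2 / (L + beta) ->
  let w := wseq E fi alpha w0 in
  let delta := deltaY R E in
  let sW := sigmaW E pi in
  let c := alpha * L * delta / n%:R in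
  let p1 := pinorm pi (const_mx 1 - n%:R *: pi) in
  forall t : nat,
    enorm (wbar (w t.+1) - wstar) <=
      (1 - gamma * alpha + c * p1 * sW ^+ t) * enorm (wbar (w t) - wstar)
      + c * blocknorm pi (fun i => (n%:R * pi i 0) *: wbar (w t) - w t i)
      + c * p1 * sW ^+ t * enorm wstar.
Proof.
move=> hE hconn hW hp hs hdiff hLip b0 SC hmin L gamma a0 aL w delta sW c p1 t.
pose G := fun z => n%:R^-1 *: \sum_i grad (fi i) z.
have HD : forall (x u : 'rV[R]_d) (s : R), is_derive s 1 (fun t => avgf fi (t *: u + x)) (dot (G (s *: u + x)) u).
  exact: avg_derive hdiff.
have HL : forall a b, enorm (G a - G b) <= L * enorm (a - b) by exact: avg_lip hLip.
have L0 : 0 <= L by exact: bigmax_ge0.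
have G0 : enorm (G wstar) = 0 by exact: grad_min HD HL L0 hmin.
set wb := wbar (w t).
pose y := yseq R E t.
pose z := fun j => (y j 0)^-1 *: w t j.
pose Gt := n%:R^-1 *: \sum_j grad (fi j) (z j).
have step : wbar (w t.+1) = wb - alpha *: Gt.
  rewrite /wbar /w /=.
  rewrite exchange_big /=.
  rewrite (eq_bigr (fun j => w t j - alpha *: grad (fi j) (z j))); last first.
    by move=> j _; rewrite -scaler_suml colsum // scale1r.
  by rewrite sumrB -scaler_sumr scalerBr /Gt !scalerA mulrC.
have ineq1 : enorm (wbar (w t.+1) - wstar) <=
    (1 - gamma * alpha) * enorm (wb - wstar) + alpha * enorm (G wb - Gt).
  rewrite step.
  have -> : wb - alpha *: Gt - wstar = ((wb - wstar) - alpha *: (G wb - G wstar)) +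
      (alpha *: (G wb - Gt) - alpha *: G wstar).
    exact: vec_id1.
  apply: le_trans (enormD _ _) _.
  apply: lerD; first exact: (gd_contract HD HL SC b0 L0 a0 aL wb wstar).
  apply: le_trans (enormD _ _) _.
  rewrite enormN [enorm (alpha *: G wstar)]enormZ G0 mulr0 addr0 enormZ ger0_norm //; exact: ltW.
have ineq2 : enorm (G wb - Gt) <= n%:R^-1 * (L * \sum_j enorm (wb - z j)).
  rewrite /G /Gt -scalerBr -sumrB enormZ ger0_norm ?invr_ge0 //.
  apply: ler_wpM2l; first by rewrite invr_ge0.
  apply: le_trans (enorm_sum _) _; rewrite mulr_sumr; apply: ler_sum => j _.
  apply: le_trans (hLip j wb (z j)) _.
  by apply: ler_wpM2r; [exact: enorm_ge0 | exact: bigmax_ge].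
have yp : forall j, 0 < y j 0 by move=> j; exact: lt_le_trans (hp j) (y_ge_pi hW hp hs t j).
have dub : forall j, (y j 0)^-1 <= delta by exact: delta_ub hW hp hs t.
have ineq3 : forall j, enorm (wb - z j) <= delta * (enorm ((n%:R * pi j 0) *: wb - w t j) +
    `|y j 0 - n%:R * pi j 0| * enorm wb).
  move=> j.
  have -> : wb - z j = (y j 0)^-1 *: (((n%:R * pi j 0) *: wb - w t j) + (y j 0 - n%:R * pi j 0) *: wb).
    by rewrite /z (vec_id2 _ _ (n%:R * pi j 0)) // gt_eqF.
  rewrite enormZ ger0_norm; last by rewrite invr_ge0 ltW.
  have hd := enormD ((n%:R * pi j 0) *: wb - w t j) ((y j 0 - n%:R * pi j 0) *: wb).
  rewrite [enorm ((y j 0 - _) *: wb)]enormZ in hd.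
  have yi : 0 <= (y j 0)^-1 by rewrite invr_ge0 ltW.
  apply: le_trans (ler_wpM2l yi hd) _.
  apply: ler_wpM2r; last exact: dub.
  by apply: addr_ge0; [exact: enorm_ge0 | apply: mulr_ge0; [exact: normr_ge0 | exact: enorm_ge0]].
have ineq4 : \sum_j enorm ((n%:R * pi j 0) *: wb - w t j) <=
    blocknorm pi (fun i => (n%:R * pi i 0) *: wb - w t i).
  exact: (sum_le_pi (fun j => enorm ((n%:R * pi j 0) *: wb - w t j)) hp hs).
have ineq5 : \sum_j `|y j 0 - n%:R * pi j 0| <= p1 * sW ^+ t.
  apply: le_trans (sum_le_pi (fun j => `|y j 0 - n%:R * pi j 0|) hp hs) _.
  have -> : \sum_j `|y j 0 - n%:R * pi j 0| ^+ 2 / pi j 0 =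
      \sum_j ((y - n%:R *: pi) j 0) ^+ 2 / pi j 0.
    by apply: eq_bigr => j _; rewrite !mxE real_normK // num_real.
  rewrite mulrC; exact: (e_bound hE hW hp hs t).
have ineq6 : enorm wb <= enorm (wb - wstar) + enorm wstar.
  by have := enormD (wb - wstar) wstar; rewrite subrK.
have ineq7 : \sum_j enorm (wb - z j) <= delta * (\sum_j enorm ((n%:R * pi j 0) *: wb - w t j) +
    (\sum_j `|y j 0 - n%:R * pi j 0|) * enorm wb).
  apply: le_trans (ler_sum _ (fun j _ => ineq3 j)) _.
  by rewrite -mulr_sumr big_split /= -mulr_suml lexx.
set S1 := \sum_j enorm ((n%:R * pi j 0) *: wb - w t j).
set S2 := \sum_j `|y j 0 - n%:R * pi j 0|.
set B := blocknorm pi (fun i => (n%:R * pi i 0) *: wb - w t i).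
set Sz := \sum_j enorm (wb - z j).
set P := p1 * sW ^+ t.
set e := enorm (wb - wstar).
set N := enorm wb.
set W := enorm wstar.
set K := alpha * n%:R^-1 * L * delta.
have S2_0 : 0 <= S2 by apply: sumr_ge0 => j _; exact: normr_ge0.
have N0 : 0 <= N by exact: enorm_ge0.
have an : 0 <= alpha * n%:R^-1 * L.
  by apply: mulr_ge0 => //; apply: mulr_ge0; [exact: ltW | rewrite invr_ge0].
have K0 : 0 <= K.
  have [n0|np] := eqVneq n 0%N.
    rewrite /K; have -> : n%:R^-1 = 0 :> R by rewrite n0 invr0.
    by rewrite mulr0 !mul0r.
  have d0 : 0 <= delta.
    have n0 : (0 < n)%N by rewrite lt0n.
    pose j0 : 'I_n := Ordinal n0.
    by apply: le_trans (dub j0); rewrite invr_ge0 ltW.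
  by rewrite /K; apply: mulr_ge0.
have ha : S2 * N <= P * (e + W) by apply: ler_pM; [exact: S2_0 | exact: N0 | exact: ineq5 | exact: ineq6].
have hb : S1 + S2 * N <= B + P * (e + W) by apply: lerD; [exact: ineq4 | exact: ha].
have hc : K * (S1 + S2 * N) <= K * (B + P * (e + W)) by apply: ler_wpM2l.
have hd : alpha * (n%:R^-1 * (L * Sz)) <= K * (S1 + S2 * N).
  have -> : alpha * (n%:R^-1 * (L * Sz)) = (alpha * n%:R^-1 * L) * Sz by ring.
  have -> : K * (S1 + S2 * N) = (alpha * n%:R^-1 * L) * (delta * (S1 + S2 * N)) by rewrite /K; ring.
  by apply: ler_wpM2l; [exact: an | exact: ineq7].
have he : alpha * enorm (G wb - Gt) <= alpha * (n%:R^-1 * (L * Sz)).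
  by apply: ler_wpM2l; [exact: ltW | exact: ineq2].
have -> : (1 - gamma * alpha + c * p1 * sW ^+ t) * e + c * B + c * p1 * sW ^+ t * W =
    (1 - gamma * alpha) * e + K * (B + P * (e + W)).
  by rewrite /c /K /P; ring.
apply: le_trans ineq1 _; apply: lerD => //.
by apply: le_trans he (le_trans hd hc).
Qed.
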